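(* Let $I\in\mathcal I_\lambda$, $a\in\{1,\dots,n-1\}$, with $a\in I_k$, $a+1\in I_l$, and let $s_{a,a+1}(z)=(z_1,\dots,z_{a-1},z_{a+1},z_a,z_{a+2},\dots,z_n)$. Then: if $k=l$: $W_I(t,s_{a,a+1}(z))=W_I(t,z)$; if $k<l$: $W_{s_{a,a+1}(I)}(t,z)=\frac{1-hz_a/z_{a+1}}{1-z_a/z_{a+1}}W_I(t,s_{a,a+1}(z))+(h-1)\frac{z_a/z_{a+1}}{1-z_a/z_{a+1}}W_I(t,z)$; if $k>l$: $W_{s_{a,a+1}(I)}(t,z)=\frac{1-h^{-1}z_{a+1}/z_a}{1-z_{a+1}/z_a}W_I(t,s_{a,a+1}(z))+(h^{-1}-1)\frac{z_{a+1}/z_a}{1-z_{a+1}/z_a}W_I(t,z)$. (Here the dependence on $h$ is suppressed.)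
   Context: Fix $N,n$, $\lambda\in\mathbb Z_{\ge0}^N$, $\sum\lambda_k=n$; $\lambda^{(k)}=\lambda_1+\dots+\lambda_k$, $\lambda^{\{1\}}=\sum_{k=1}^{N-1}\lambda^{(k)}$. $\mathcal I_\lambda$ = ordered partitions $I=(I_1,\dots,I_N)$ of $\{1,\dots,n\}$ with $|I_k|=\lambda_k$; $I_1\cup\dots\cup I_k=\{i^{(k)}_1<\dots<i^{(k)}_{\lambda^{(k)}}\}$; $s_{a,a+1}(I)$ is obtained from $I$ by swapping the elements $a$ and $a+1$. Weight functions: variables $t^{(k)}_a$ ($1\le k\le N-1$), $z_1,\dots,z_n$, $h$, $t^{(N)}_a=z_a$; $U_I=\prod_{k=1}^{N-1}\prod_{a=1}^{\lambda^{(k)}}\Big(\prod_{c:\,i^{(k+1)}_c<i^{(k)}_a}(1-ht^{(k+1)}_c/t^{(k)}_a)\prod_{c:\,i^{(k+1)}_c>i^{(k)}_a}(1-t^{(k+1)}_c/t^{(k)}_a)\prod_{b=a+1}^{\lambda^{(k)}}\frac{1-ht^{(k)}_b/t^{(k)}_a}{1-t^{(k)}_b/t^{(k)}_a}\Big)$ ($c\in\{1..\lambda^{(k+1)}\}$); $W_I=(1-h)^{\lambda^{\{1\}}}\mathrm{Sym}_{t^{(1)}}\cdots\mathrm{Sym}_{t^{(N-1)}}U_I$ (sum over permutations within each group $t^{(k)}$). *)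

(* Defs.v *)
(* All indices are 1-based as in the paper. *)
From HB Require Import structures.
From mathcomp Require Import all_boot all_order all_algebra all_fingroup.
Set Implicit Arguments. Unset Strict Implicit. Unset Printing Implicit Defensive.
Import GRing.Theory.

Definition lamP (lam : nat -> nat) (k : nat) : nat := \sum_(1 <= j < k.+1) lam j.
Definition lamB (N : nat) (lam : nat -> nat) : nat := \sum_(1 <= k < N) lamP lam k.

(* An ordered partition I = (I_1,...,I_N) of {1..n} with |I_k| = lambda_k,
   encoded by the block-assignment map f : element i |-> the k with i in I_k. *)
Definition is_part (N n : nat) (lam : nat -> nat) (f : nat -> nat) : Prop :=
  (forall i, 1 <= i <= n -> 1 <= f i <= N) /\
  (forall k, 1 <= k <= N -> count (fun i => f i == k) (iota 1 n) = lam k).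

Definition ielt (n : nat) (f : nat -> nat) (k c : nat) : nat :=
  nth 0 [seq i <- iota 1 n | f i <= k] c.-1.

Definition swapn (a i : nat) : nat :=
  if i == a then a.+1 else if i == a.+1 then a else i.

Definition sI (a : nat) (f : nat -> nat) : nat -> nat := fun i => f (swapn a i).
Definition sz (K : Type) (a : nat) (z : nat -> K) : nat -> K := fun i => z (swapn a i).

Local Open Scope ring_scope.

(* the variables t^{(k)}_c, with t^{(N)}_c = z_c *)
Definition tvar (K : fieldType) (N : nat) (t : nat -> nat -> K) (z : nat -> K)
  (k c : nat) : K := if k == N then z c else t k c.

Definition Ufun (K : fieldType) (N n : nat) (lam : nat -> nat) (f : nat -> nat)
  (h : K) (t : nat -> nat -> K) (z : nat -> K) : K :=
  \prod_(1 <= k < N) \prod_(1 <= a < (lamP lam k).+1)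
    ((\prod_(1 <= c < (lamP lam k.+1).+1)
        (if (ielt n f k.+1 c < ielt n f k a)%N
         then 1 - h * tvar N t z k.+1 c / tvar N t z k a
         else if (ielt n f k a < ielt n f k.+1 c)%N
         then 1 - tvar N t z k.+1 c / tvar N t z k a
         else 1))
     * \prod_(a.+1 <= b < (lamP lam k).+1)
         ((1 - h * tvar N t z k b / tvar N t z k a)
          / (1 - tvar N t z k b / tvar N t z k a))).

Definition permvar (K : Type) (m L : nat) (s : 'S_L) (t : nat -> nat -> K)
  : nat -> nat -> K :=
  fun j c =>
    if (j == m) && (0 < c)%N then
      (if insub c.-1 is Some i then t j (val (s i)).+1 else t j c)
    else t j c.

(* Sym_{t^{(1)}} ... Sym_{t^{(m)}} (sum over permutations, no normalization) *)
Fixpoint SymUpto (K : fieldType) (lam : nat -> nat) (m : nat)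
  (F : (nat -> nat -> K) -> K) {struct m} : (nat -> nat -> K) -> K :=
  match m with
  | 0 => F
  | m'.+1 => SymUpto lam m'
               (fun t => \sum_(s : 'S_(lamP lam m'.+1)) F (permvar m'.+1 s t))
  end.

Definition W (K : fieldType) (N n : nat) (lam : nat -> nat) (f : nat -> nat)
  (h : K) (t : nat -> nat -> K) (z : nat -> K) : K :=
  (1 - h) ^+ lamB N lam * SymUpto lam N.-1 (fun t' => Ufun N n lam f h t' z) t.

(* Main.v *)
Require Import Defs.
From HB Require Import structures.
From mathcomp Require Import all_boot all_order all_algebra all_fingroup.
From mathcomp Require Import zify ring.
From Stdlib Require Import FunctionalExtensionality.
Import GRing.Theory.

Module MP1.
Local Set Implicit Arguments. Local Unset Strict Implicit. Local Unset Printing Implicit Defensive.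
Local Open Scope ring_scope.

Lemma swapn_a a : swapn a a = a.+1.
Proof. by rewrite /swapn eqxx. Qed.
Lemma swapn_a1 a : swapn a a.+1 = a.
Proof. by rewrite /swapn eqxx (gtn_eqF (ltnSn a)). Qed.
Lemma swapn_id a i : i != a -> i != a.+1 -> swapn a i = i.
Proof. by rewrite /swapn => /negPf -> /negPf ->. Qed.
Lemma swapnK a i : swapn a (swapn a i) = i.
Proof.
rewrite /swapn; case: (eqVneq i a) => [->|ia]; first by rewrite (gtn_eqF (ltnSn a)) eqxx.
case: (eqVneq i a.+1) => [->|ia1]; first by rewrite eqxx.
by rewrite (negPf ia) (negPf ia1).
Qed.

Lemma szK (T : Type) a (z : nat -> T) : sz a (sz a z) = z.
Proof. by apply: functional_extensionality => i; rewrite /sz swapnK. Qed.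

Definition permz (K : Type) (L : nat) (s : 'S_L) (T : nat -> K) : nat -> K :=
  fun c => if (0 < c)%N then
      (if insub c.-1 is Some i then T (val (s i)).+1 else T c) else T c.

Lemma permvar_eq (K : Type) m L (s : 'S_L) (t : nat -> nat -> K) :
  permvar m s t m = permz s (t m).
Proof. by apply: functional_extensionality => c; rewrite /permvar /permz eqxx. Qed.

Lemma permvar_neq (K : Type) m L (s : 'S_L) (t : nat -> nat -> K) j :
  j != m -> permvar m s t j = t j.
Proof. by move=> /negPf jm; apply: functional_extensionality => c; rewrite /permvar jm. Qed.

Lemma permzE (K : Type) L (s : 'S_L) (T : nat -> K) c (Hc : (c.-1 < L)%N) :
  (0 < c)%N -> permz s T c = T (val (s (Ordinal Hc))).+1.
Proof.
move=> c0; rewrite /permz c0 insubT /=; congr (T (val (s _)).+1).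
Qed.

Lemma permz_out (K : Type) L (s : 'S_L) (T : nat -> K) c :
  ~~ (1 <= c <= L)%N -> permz s T c = T c.
Proof.
rewrite /permz; case: c => [|c] //= H; rewrite insubF //.
by move: H; rewrite ltnNge; case: leqP.
Qed.

Section Sym.
Variable K : fieldType.
Variable lam : nat -> nat.

Lemma SymUpto_loc m j (F G : (nat -> nat -> K) -> K) t :
  (m < j)%N -> (forall u, u j = t j -> F u = G u) ->
  SymUpto lam m F t = SymUpto lam m G t.
Proof.
elim: m F G => [|m IH] F G mj FG /=; first by apply: FG.
apply: IH; first by apply: ltnW.
move=> u uj; apply: eq_bigr => s _; apply: FG.
rewrite permvar_neq //; by rewrite gtn_eqF.
Qed.

Lemma SymUpto_ext m (F G : (nat -> nat -> K) -> K) t :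
  (forall u, F u = G u) -> SymUpto lam m F t = SymUpto lam m G t.
Proof. by move=> FG; apply: (@SymUpto_loc m m.+1) => // u _; apply: FG. Qed.

Lemma SymUpto_sum m (I : finType) (G : I -> (nat -> nat -> K) -> K) t :
  SymUpto lam m (fun u => \sum_(i : I) G i u) t = \sum_(i : I) SymUpto lam m (G i) t.
Proof.
elim: m G t => [|m IH] G t //=.
rewrite -IH; apply: SymUpto_ext => u; exact: exchange_big.
Qed.

Lemma SymUpto_scale m (c : K) (G : (nat -> nat -> K) -> K) t :
  SymUpto lam m (fun u => c * G u) t = c * SymUpto lam m G t.
Proof.
elim: m G t => [|m IH] G t //=.
rewrite -IH; apply: SymUpto_ext => u; by rewrite mulr_sumr.
Qed.
End Sym.

End MP1.
Import MP1.

Module MP2.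
Local Set Implicit Arguments. Local Unset Strict Implicit. Local Unset Printing Implicit Defensive.

Lemma lamPS lam k : lamP lam k.+1 = (lamP lam k + lam k.+1)%N.
Proof. by rewrite /lamP big_nat_recr. Qed.

Lemma count_le N n lam f k : is_part N n lam f -> (k <= N)%N ->
  count (fun i => f i <= k)%N (iota 1 n) = lamP lam k.
Proof.
case=> Hr Hc; elim: k => [|k IH] kN.
  rewrite /lamP big_geq //; transitivity (count pred0 (iota 1 n)); last exact: count_pred0.
  apply: eq_in_count => i.
  rewrite mem_iota => Hi; have := Hr i; rewrite leqn0; case: (f i) => //=.
  by rewrite addnC addn1 ltnS in Hi; move=> /(_ Hi).
rewrite lamPS -IH ?(ltnW kN) // -(Hc k.+1); last by rewrite kN.
rewrite -count_predUI.
rewrite [count (predI _ _) _](_ : _ = 0%N) ?addn0; last first.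
  transitivity (count pred0 (iota 1 n)); last exact: count_pred0.
  apply: eq_count => i /=.
  by case: (eqVneq (f i) k.+1) => [->|]; rewrite ?ltnn ?andbF ?andbT.
apply: eq_count => i /=; rewrite leq_eqVlt ltnS orbC.
by [].
Qed.

Lemma ielt_top N n lam f c : is_part N n lam f -> (1 <= c <= n)%N -> ielt n f N c = c.
Proof.
case=> Hr _ Hc; rewrite /ielt.
rewrite (_ : [seq i <- iota 1 n | f i <= N]%N = iota 1 n).
  rewrite nth_iota; last by lia. by lia.
apply/all_filterP/allP => i; rewrite mem_iota => Hi.
have := Hr i; lia.
Qed.

Lemma mem_ielt n f k c : (1 <= c <= count (fun i => f i <= k)%N (iota 1 n))%N ->
  (1 <= ielt n f k c <= n)%N /\ (f (ielt n f k c) <= k)%N.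
Proof.
move=> Hc; rewrite /ielt.
have : nth 0%N [seq i <- iota 1 n | f i <= k]%N c.-1 \in [seq i <- iota 1 n | f i <= k]%N.
  by apply: mem_nth; rewrite size_filter; move: Hc; case: c => //= c /andP[].
rewrite mem_filter mem_iota => /andP[-> H]; split => //; lia.
Qed.

Section Low.
Variables (N' n : nat) (lam : nat -> nat) (f : nat -> nat).
Hypothesis HP : is_part N'.+1 n lam f.
Let m := lamP lam N'.
Let jj := ielt n f N'.
Let f' := fun q => f (jj q).

Lemma Jl_sorted : sorted ltn [seq i <- iota 1 n | f i <= N']%N.
Proof. apply: sorted_filter; [exact: ltn_trans| exact: iota_ltn_sorted]. Qed.

Lemma Jl_size : size [seq i <- iota 1 n | f i <= N']%N = m.
Proof. by rewrite size_filter (count_le HP). Qed.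

Lemma Jl_map : map jj (iota 1 m) = [seq i <- iota 1 n | f i <= N']%N.
Proof.
rewrite -[RHS](mkseq_nth 0%N) Jl_size /mkseq.
rewrite -addn1 addnC iotaDl -map_comp; apply: eq_map => q /=.
by rewrite /jj /ielt addnC addn1.
Qed.

Lemma filter_low k : (k <= N')%N ->
  [seq i <- iota 1 n | f i <= k]%N = map jj [seq q <- iota 1 m | f' q <= k]%N.
Proof.
move=> kN.
transitivity [seq i <- [seq i <- iota 1 n | f i <= N']%N | f i <= k]%N.
  rewrite -filter_predI; apply: eq_filter => i /=.
  by case E: (f i <= k)%N => //=; rewrite (leq_trans E kN).
by rewrite -Jl_map filter_map.
Qed.

Lemma jj_mono x y : (1 <= x <= m)%N -> (1 <= y <= m)%N -> (x < y)%N -> (jj x < jj y)%N.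
Proof.
move=> Hx Hy xy; rewrite /jj /ielt.
apply: (sorted_ltn_nth ltn_trans 0%N Jl_sorted); rewrite ?inE ?Jl_size //; lia.
Qed.

Lemma jj_ltE x y : (1 <= x <= m)%N -> (1 <= y <= m)%N -> (jj x < jj y)%N = (x < y)%N.
Proof.
move=> Hx Hy; case: (ltngtP x y) => [xy|yx|->]; first exact: jj_mono.
  by apply/negbTE; rewrite -leqNgt ltnW // jj_mono.
by rewrite ltnn.
Qed.

Lemma count_low k : (k <= N')%N ->
  count (fun q => f' q <= k)%N (iota 1 m) = lamP lam k.
Proof.
move=> kN; rewrite -size_filter -(size_map jj) -filter_low // size_filter.
by rewrite (count_le HP) // (leq_trans kN).
Qed.

Lemma ielt_low k c : (k <= N')%N -> (1 <= c <= lamP lam k)%N ->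
  ielt n f k c = jj (ielt m f' k c).
Proof.
move=> kN Hc; rewrite {1}/ielt filter_low // (nth_map 0%N) //.
rewrite size_filter count_low //; lia.
Qed.

Lemma ielt_low_range k c : (k <= N')%N -> (1 <= c <= lamP lam k)%N ->
  (1 <= ielt m f' k c <= m)%N.
Proof.
move=> kN Hc; have [] := @mem_ielt m f' k c; first by rewrite count_low.
by [].
Qed.

Lemma is_part_low : is_part N' m lam f'.
Proof.
case: HP => Hr Hc; split.
  move=> q Hq; have [] := @mem_ielt n f N' q; first by rewrite (count_le HP).
  move=> Hi Hf; have := Hr _ Hi; rewrite /f' /jj; lia.
move=> k Hk; rewrite -(Hc k); last by lia.
rewrite -(count_map jj (fun i => f i == k)) Jl_map count_filter.
apply: eq_count => i /=; case: (eqVneq (f i) k) => [->|] //=; apply/idP; lia.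
Qed.
End Low.

End MP2.
Import MP2.

Module MP3.
Local Set Implicit Arguments. Local Unset Strict Implicit. Local Unset Printing Implicit Defensive.
Local Open Scope ring_scope.

Section Split.
Variable K : fieldType.
Variable h : K.

Definition Cz (n j : nat) (u : K) (z : nat -> K) : K :=
  \prod_(1 <= c < n.+1)
     (if (c < j)%N then 1 - h * z c / u else if (j < c)%N then 1 - z c / u else 1).

Definition Topf (m n : nat) (jj : nat -> nat) (U z : nat -> K) : K :=
  \prod_(1 <= q < m.+1) (Cz n (jj q) (U q) z *
     \prod_(q.+1 <= b < m.+1) ((1 - h * U b / U q) / (1 - U b / U q))).

Lemma tvar_lt N (t : nat -> nat -> K) z k : (k < N)%N -> tvar N t z k = t k.
Proof. by move=> kN; rewrite /tvar ltn_eqF. Qed.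

Lemma tvar_le N (t : nat -> nat -> K) k : (k <= N)%N -> tvar N t (t N) k = t k.
Proof. by move=> kN; rewrite /tvar; case: eqP => [->|]. Qed.

Lemma tvar_top N (t : nat -> nat -> K) z : tvar N t z N = z.
Proof. by rewrite /tvar eqxx. Qed.

Lemma Ufun_ext_low N n lam g (u v : nat -> nat -> K) z :
  (forall k, (k < N)%N -> u k = v k) -> Ufun N n lam g h u z = Ufun N n lam g h v z.
Proof.
move=> uv; rewrite /Ufun; apply: eq_big_nat => k Hk.
have E : forall j, (j <= N)%N -> tvar N u z j = tvar N v z j.
  move=> j jN; rewrite /tvar; case: eqP => // /eqP jN'.
  by apply: uv; rewrite ltn_neqAle jN' jN.
by rewrite (E k) ?(E k.+1) //; lia.
Qed.

Lemma Ufun_split N' n lam f (u : nat -> nat -> K) z :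
  (1 <= N')%N -> is_part N'.+1 n lam f -> lamP lam N'.+1 = n ->
  Ufun N'.+1 n lam f h u z =
  Ufun N' (lamP lam N') lam (fun q => f (ielt n f N' q)) h u (u N') *
  Topf (lamP lam N') n (ielt n f N') (u N') z.
Proof.
move=> N1 HP Hn; rewrite /Ufun big_nat_recr //=; congr (_ * _).
  apply: eq_big_nat => k Hk.
  rewrite !(tvar_lt (N := N'.+1)); try lia. rewrite !tvar_le; try lia.
  apply: eq_big_nat => a Ha; congr (_ * _).
  apply: eq_big_nat => c Hc.
  rewrite (ielt_low HP (k := k.+1)) ?(ielt_low HP (k := k)); try lia.
  have Ra := ielt_low_range HP (k := k) (c := a).
  have Rc := ielt_low_range HP (k := k.+1) (c := c).
  rewrite !(jj_ltE HP) //; (apply: Ra || apply: Rc); lia.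
rewrite /Topf tvar_top tvar_lt // Hn; apply: eq_big_nat => a Ha.
congr (_ * _); rewrite /Cz; apply: eq_big_nat => c Hc.
by rewrite (ielt_top HP); last lia.
Qed.

Lemma lamBS N lam : (1 <= N)%N -> lamB N.+1 lam = (lamB N lam + lamP lam N)%N.
Proof. by move=> N1; rewrite /lamB big_nat_recr. Qed.

Lemma Wsplit N' n lam f (t : nat -> nat -> K) z :
  (1 <= N')%N -> is_part N'.+1 n lam f -> lamP lam N'.+1 = n ->
  W N'.+1 n lam f h t z = (1 - h) ^+ lamP lam N' *
    \sum_(s : 'S_(lamP lam N')) (Topf (lamP lam N') n (ielt n f N') (permz s (t N')) z *
      W N' (lamP lam N') lam (fun q => f (ielt n f N' q)) h t (permz s (t N'))).
Proof.
move=> N1 HP Hn.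
have core : SymUpto lam N' (fun u => Ufun N'.+1 n lam f h u z) t =
  \sum_(s : 'S_(lamP lam N')) (Topf (lamP lam N') n (ielt n f N') (permz s (t N')) z *
      SymUpto lam N'.-1 (fun u => Ufun N' (lamP lam N') lam (fun q => f (ielt n f N' q)) h u
          (permz s (t N'))) t).
  case: N' N1 HP Hn => [//|N''] _ HP Hn /=.
  rewrite (@SymUpto_loc _ _ N'' N''.+1 _
   (fun u => \sum_(s : 'S_(lamP lam N''.+1))
     ((Topf (lamP lam N''.+1) n (ielt n f N''.+1) (permz s (t N''.+1)) z) *
      Ufun N''.+1 (lamP lam N''.+1) lam (fun q => f (ielt n f N''.+1 q)) h u
          (permz s (t N''.+1))))) //; last first.
    move=> u uN; apply: eq_bigr => s _.
    rewrite Ufun_split // permvar_eq uN mulrC; congr (_ * _).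
    apply: Ufun_ext_low => k kN; rewrite permvar_neq //; lia.
  rewrite SymUpto_sum; apply: eq_bigr => s _.
  by rewrite SymUpto_scale.
rewrite /W /= core lamBS // exprD mulr_sumr mulr_sumr; apply: eq_bigr => s _.
by rewrite (mulrC (_ ^+ lamB _ _)) -mulrA; congr (_ * _); rewrite mulrCA.
Qed.
End Split.

End MP3.
Import MP3.

Module MP4.
Local Set Implicit Arguments. Local Unset Strict Implicit. Local Unset Printing Implicit Defensive.
Local Open Scope ring_scope.

Section Fac.
Variable K : fieldType.
Variable h : K.

Lemma prod_split3 lo a n (F : nat -> K) : (lo <= a)%N -> (a < n)%N ->
  \prod_(lo <= c < n.+1) F c =
  \prod_(lo <= c < a) F c * (F a * F a.+1) * \prod_(a.+2 <= c < n.+1) F c.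
Proof.
move=> la an; rewrite (big_cat_nat _ (n := a)) //=; last by lia.
rewrite (big_ltn (m := a)); last by lia.
rewrite (big_ltn (m := a.+1)); last by lia.
by rewrite !mulrA.
Qed.

Lemma prod_split1 lo p m (F : nat -> K) : (lo <= p)%N -> (p <= m)%N ->
  \prod_(lo <= c < m.+1) F c =
  \prod_(lo <= c < p) F c * F p * \prod_(p.+1 <= c < m.+1) F c.
Proof.
move=> la an; rewrite (big_cat_nat _ (n := p)) //=; last by lia.
rewrite (big_ltn (m := p)); last by lia.
by rewrite !mulrA.
Qed.

Variables (n a : nat).
Hypothesis Ha : (1 <= a < n)%N.

Definition Rp (u : K) (z : nat -> K) :=
  \prod_(1 <= c < a) (1 - h * z c / u) * \prod_(a.+2 <= c < n.+1) (1 - z c / u).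

Lemma Cz_a u z : Cz h n a u z = Rp u z * (1 - z a.+1 / u).
Proof.
rewrite /Cz (prod_split3 _ (a := a)); try lia.
have -> : (a.+1 < a)%N = false by lia.
rewrite ltnn ltnSn /Rp.
rewrite (@eq_big_nat _ _ _ 1 a _ (fun c => 1 - h * z c / u)); last first.
  by move=> c Hc; have -> : (c < a)%N = true by lia.
rewrite (@eq_big_nat _ _ _ a.+2 n.+1 _ (fun c => 1 - z c / u)); last first.
  move=> c Hc; have -> : (c < a)%N = false by lia.
  by have -> : (a < c)%N = true by lia.
by rewrite mul1r mulrAC.
Qed.

Lemma Cz_a1 u z : Cz h n a.+1 u z = Rp u z * (1 - h * z a / u).
Proof.
rewrite /Cz (prod_split3 _ (a := a)); try lia.
rewrite ltnSn ltnn /Rp.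
rewrite (@eq_big_nat _ _ _ 1 a _ (fun c => 1 - h * z c / u)); last first.
  by move=> c Hc; have -> : (c < a.+1)%N = true by lia.
rewrite (@eq_big_nat _ _ _ a.+2 n.+1 _ (fun c => 1 - z c / u)); last first.
  move=> c Hc; have -> : (c < a.+1)%N = false by lia.
  by have -> : (a.+1 < c)%N = true by lia.
by rewrite mulr1 mulrAC.
Qed.

Lemma Rp_sz u z : Rp u (sz a z) = Rp u z.
Proof.
rewrite /Rp /sz; congr (_ * _); apply: eq_big_nat => c Hc; rewrite swapn_id //; lia.
Qed.

Lemma Cz_sz j u z : j != a -> j != a.+1 -> Cz h n j u (sz a z) = Cz h n j u z.
Proof.
move=> ja ja1; rewrite /Cz (prod_split3 _ (a := a)); try lia.
rewrite [in RHS](prod_split3 _ (a := a)); try lia.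
have E : forall c, (1 <= c < a)%N || (a.+2 <= c < n.+1)%N -> sz a z c = z c.
  by move=> c Hc; rewrite /sz swapn_id //; lia.
congr (_ * _ * _).
- by apply: eq_big_nat => c Hc; rewrite E //; lia.
- rewrite /sz swapn_a swapn_a1.
  case: (ltnP j a) => ja'.
    have -> : (a < j)%N = false by lia. have -> : (a.+1 < j)%N = false by lia.
    have -> : (j < a.+1)%N = true by lia.
    by rewrite mulrC.
  have -> : (a < j)%N = true by lia. have -> : (a.+1 < j)%N = true by lia.
  by rewrite mulrC.
- by apply: eq_big_nat => c Hc; rewrite E //; lia.
Qed.
End Fac.

End MP4.
Import MP4.

Module MP5.
Local Set Implicit Arguments. Local Unset Strict Implicit. Local Unset Printing Implicit Defensive.
Local Open Scope ring_scope.

Section Top.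
Variable K : fieldType.
Variable h : K.
Variables (n a m : nat).
Hypothesis Ha : (1 <= a < n)%N.

Definition chi (v u : K) := (1 - h * v / u) / (1 - v / u).

Definition Gq (jj : nat -> nat) (U z : nat -> K) q :=
  Cz h n (jj q) (U q) z * \prod_(q.+1 <= b < m.+1) chi (U b) (U q).

Lemma TopfE jj U z : Topf h m n jj U z = \prod_(1 <= q < m.+1) Gq jj U z q.
Proof. by []. Qed.

Lemma TopB jj jj' p U z : (1 <= p <= m)%N ->
  (forall q, (1 <= q <= m)%N -> q != p -> jj' q = jj q /\ jj q != a /\ jj q != a.+1) ->
  exists X, [/\ Topf h m n jj U z = X * Cz h n (jj p) (U p) z,
      Topf h m n jj' U z = X * Cz h n (jj' p) (U p) z &
      Topf h m n jj U (sz a z) = X * Cz h n (jj p) (U p) (sz a z)].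
Proof.
move=> Hp Hq.
exists (\prod_(1 <= q < p) Gq jj U z q * \prod_(p.+1 <= b < m.+1) chi (U b) (U p) *
        \prod_(p.+1 <= q < m.+1) Gq jj U z q).
have Hq1 : forall q, (1 <= q < p)%N || (p.+1 <= q < m.+1)%N ->
   Gq jj' U z q = Gq jj U z q /\ Gq jj U (sz a z) q = Gq jj U z q.
  move=> q Hr; have [] := Hq q; try lia. move=> E [E1 E2].
  by rewrite /Gq E Cz_sz.
have SP : forall jj0 z0, Topf h m n jj0 U z0 = \prod_(1 <= q < p) Gq jj0 U z0 q * Gq jj0 U z0 p *
   \prod_(p.+1 <= q < m.+1) Gq jj0 U z0 q.
  by move=> jj0 z0; rewrite TopfE (prod_split1 _ (p := p)) //; lia.
rewrite !SP.
split.
- by rewrite /Gq; ring.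
- rewrite (@eq_big_nat _ _ _ 1 p (Gq jj' U z) (Gq jj U z)); last first.
    by move=> q Hr; have [] := Hq1 q; first lia.
  rewrite (@eq_big_nat _ _ _ p.+1 m.+1 (Gq jj' U z) (Gq jj U z)); last first.
    by move=> q Hr; have [] := Hq1 q; first lia.
  by rewrite /Gq; ring.
- rewrite (@eq_big_nat _ _ _ 1 p (Gq jj U (sz a z)) (Gq jj U z)); last first.
    by move=> q Hr; have [] := Hq1 q; first lia.
  rewrite (@eq_big_nat _ _ _ p.+1 m.+1 (Gq jj U (sz a z)) (Gq jj U z)); last first.
    by move=> q Hr; have [] := Hq1 q; first lia.
  by rewrite /Gq; ring.
Qed.

Definition Qf (x y za zb : K) :=
  chi y x * ((1 - zb / x) * (1 - h * za / y)).

Section C.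
Variables (jj : nat -> nat) (p : nat).
Hypothesis Hp : (1 <= p < m)%N.
Hypothesis Hja : jj p = a.
Hypothesis Hja1 : jj p.+1 = a.+1.
Hypothesis Hjo : forall q, (1 <= q <= m)%N -> q != p -> q != p.+1 -> jj q != a /\ jj q != a.+1.

Definition P2 (U : nat -> K) :=
  \prod_(p.+2 <= b < m.+1) (chi (U b) (U p) * chi (U b) (U p.+1)).

Lemma M_gen U z : Gq jj U z p * Gq jj U z p.+1 =
  Rp h n a (U p) z * Rp h n a (U p.+1) z * P2 U * Qf (U p) (U p.+1) (z a) (z a.+1).
Proof.
rewrite /Gq Hja Hja1 Cz_a // Cz_a1 // (big_ltn (m := p.+1)); last by lia.
rewrite /P2 (big_split _ _ _ (fun b => chi (U b) (U p)) (fun b => chi (U b) (U p.+1))) /Qf /=; ring.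
Qed.

Lemma G_sU q U z : (1 <= q <= m)%N -> q != p -> q != p.+1 ->
  Gq jj (sz p U) z q = Gq jj U z q.
Proof.
move=> Hq qp qp1; rewrite /Gq /sz (swapn_id qp qp1); congr (_ * _).
case: (ltnP q p) => qlt.
  rewrite (prod_split3 _ (a := p)); try lia.
  rewrite [in RHS](prod_split3 _ (a := p)); try lia.
  rewrite swapn_a swapn_a1 (mulrC (chi (U p.+1) _)).
  by congr (_ * _ * _); apply: eq_big_nat => b Hb; rewrite swapn_id //; lia.
by apply: eq_big_nat => b Hb; rewrite swapn_id //; lia.
Qed.

Lemma G_sz q U z : (1 <= q <= m)%N -> q != p -> q != p.+1 ->
  Gq jj U (sz a z) q = Gq jj U z q.
Proof.
move=> Hq qp qp1; have [E1 E2] := Hjo Hq qp qp1.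
by rewrite /Gq Cz_sz.
Qed.

Lemma P2_sU U : P2 (sz p U) = P2 U.
Proof.
rewrite /P2 {2 4}/sz swapn_a swapn_a1; apply: eq_big_nat => b Hb.
rewrite /sz swapn_id; try lia. by rewrite mulrC.
Qed.

Lemma TopC U z : exists S,
  [/\ Topf h m n jj U z = S * Qf (U p) (U p.+1) (z a) (z a.+1),
      Topf h m n jj (sz p U) z = S * Qf (U p.+1) (U p) (z a) (z a.+1),
      Topf h m n jj U (sz a z) = S * Qf (U p) (U p.+1) (z a.+1) (z a) &
      Topf h m n jj (sz p U) (sz a z) = S * Qf (U p.+1) (U p) (z a.+1) (z a)].
Proof.
pose S := \prod_(1 <= q < p) Gq jj U z q * \prod_(p.+2 <= q < m.+1) Gq jj U z q *
   (Rp h n a (U p) z * Rp h n a (U p.+1) z * P2 U).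
have key : forall U' z', (U' = U \/ U' = sz p U) -> (z' = z \/ z' = sz a z) ->
   Topf h m n jj U' z' = \prod_(1 <= q < p) Gq jj U z q *
     (Gq jj U' z' p * Gq jj U' z' p.+1) * \prod_(p.+2 <= q < m.+1) Gq jj U z q.
  move=> U' z' HU Hz; rewrite TopfE (prod_split3 _ (a := p)); try lia.
  have E : forall q, (1 <= q <= m)%N -> q != p -> q != p.+1 -> Gq jj U' z' q = Gq jj U z q.
    move=> q Hq qp qp1.
    case: HU => ->; case: Hz => ->;
      rewrite ?G_sU ?G_sz //.
  congr (_ * _ * _); apply: eq_big_nat => q Hq; apply: E; lia.
exists S; split.
- by rewrite key; [rewrite M_gen /S; ring| left | left].
- rewrite key; [|right|left] => //.
  rewrite M_gen /S P2_sU /sz swapn_a swapn_a1; ring.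
- rewrite key; [|left|right] => //.
  rewrite M_gen /S !Rp_sz // /sz swapn_a swapn_a1; ring.
- rewrite key; [|right|right] => //.
  rewrite M_gen /S !Rp_sz // P2_sU /sz !swapn_a !swapn_a1; ring.
Qed.
End C.
End Top.

End MP5.
Import MP5.

Module MP6.
Local Set Implicit Arguments. Local Unset Strict Implicit. Local Unset Printing Implicit Defensive.

Lemma sub3_lt A B C q : (q < A + B + C)%N -> (A + B <= q)%N -> (q - A - B < C)%N.
Proof. lia. Qed.

Section Lists.
Variables (n a : nat).
Hypothesis Ha : (1 <= a < n)%N.

Lemma iota_split : iota 1 n = iota 1 a.-1 ++ [:: a; a.+1] ++ iota a.+2 (n - a.+1).
Proof.
have -> : n = (a.-1 + (2 + (n - a.+1)))%N by lia.
rewrite iotaD iotaD /=; congr (_ ++ _ :: _ :: _); try lia.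
congr iota; lia.
Qed.

Variable P : pred nat.
Definition L1 := filter P (iota 1 a.-1).
Definition L2 := filter P (iota a.+2 (n - a.+1)).

Lemma filter_split : filter P (iota 1 n) = L1 ++ filter P [:: a; a.+1] ++ L2.
Proof. by rewrite iota_split !filter_cat. Qed.

Lemma filter_split_sw :
  filter (fun i => P (swapn a i)) (iota 1 n) =
  L1 ++ filter (fun i => P (swapn a i)) [:: a; a.+1] ++ L2.
Proof.
rewrite iota_split !filter_cat; congr (_ ++ _ ++ _).
  apply: eq_in_filter => i; rewrite mem_iota => Hi; rewrite swapn_id //; lia.
apply: eq_in_filter => i; rewrite mem_iota => Hi; rewrite swapn_id //; lia.
Qed.

Lemma L1_lt x : x \in L1 -> (1 <= x < a)%N.
Proof. rewrite mem_filter mem_iota => /andP[_]; lia. Qed.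
Lemma L2_gt x : x \in L2 -> (a.+1 < x <= n)%N.
Proof. rewrite mem_filter mem_iota => /andP[_]; lia. Qed.

Lemma nth_J (mid : seq nat) q : (q < size L1 + size mid + size L2)%N ->
  let s := L1 ++ mid ++ L2 in
  [/\ (q < size L1)%N -> (1 <= nth 0 s q < a)%N,
      (size L1 + size mid <= q)%N -> (a.+1 < nth 0 s q <= n)%N &
      (size L1 <= q < size L1 + size mid)%N -> nth 0 s q = nth 0 mid (q - size L1)].
Proof.
move=> Hq s; rewrite /s; clear s; split => Hr; rewrite nth_cat.
- by rewrite Hr; apply: L1_lt; apply: mem_nth.
- have -> : (q < size L1)%N = false by lia.
  rewrite nth_cat; have -> : (q - size L1 < size mid)%N = false by lia.
  apply: L2_gt; apply: mem_nth; exact: sub3_lt.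
- have -> : (q < size L1)%N = false by lia.
  by rewrite nth_cat; have -> : (q - size L1 < size mid)%N = true by lia.
Qed.
End Lists.

End MP6.
Import MP6.

Module MP7.
Local Set Implicit Arguments. Local Unset Strict Implicit. Local Unset Printing Implicit Defensive.
Local Open Scope ring_scope.

Lemma ielt_ext n (f g : nat -> nat) :
  (forall i, (1 <= i <= n)%N -> f i = g i) -> ielt n f = ielt n g.
Proof.
move=> E; apply: functional_extensionality => k; apply: functional_extensionality => c.
rewrite /ielt; congr nth; apply: eq_in_filter => i; rewrite mem_iota => Hi.
by rewrite E //; lia.
Qed.

Lemma W_ext (K : fieldType) N n lam (f g : nat -> nat) (h : K) t z :
  (forall i, (1 <= i <= n)%N -> f i = g i) -> W N n lam f h t z = W N n lam g h t z.
Proof. by move=> E; rewrite /W /Ufun (ielt_ext E). Qed.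

Lemma is_part_sI N n lam f a : (1 <= a < n)%N -> is_part N n lam f -> is_part N n lam (sI a f).
Proof.
move=> Ha [Hr Hc]; split.
  move=> i Hi; rewrite /sI; apply: Hr.
  case: (eqVneq i a) => [->|ia]; first by rewrite swapn_a; lia.
  case: (eqVneq i a.+1) => [->|ia1]; first by rewrite swapn_a1; lia.
  by rewrite swapn_id.
move=> k Hk; rewrite -(Hc k Hk) (iota_split Ha) !count_cat; congr (_ + (_ + _))%N.
- apply: eq_in_count => i; rewrite mem_iota => Hi; rewrite /sI swapn_id //; lia.
- by rewrite /= /sI swapn_a swapn_a1 !addn0 addnC.
- apply: eq_in_count => i; rewrite mem_iota => Hi; rewrite /sI swapn_id //; lia.
Qed.

Section Reindex.
Variable K : Type.
Variable R : comRingType.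

Lemma sz_permz m p (s : 'S_m) (T : nat -> K) (H1 : (p.-1 < m)%N) (H2 : (p < m)%N) :
  (1 <= p)%N -> sz p (permz s T) = permz (tperm (Ordinal H1) (Ordinal H2) * s)%g T.
Proof.
move=> p1; apply: functional_extensionality => c; rewrite /sz.
case: (boolP (1 <= c <= m)%N) => Hc; last first.
  rewrite swapn_id; try (apply/eqP; move=> E; move: Hc; rewrite E; lia).
  by rewrite !permz_out.
have Hc1 : (c.-1 < m)%N by lia.
have Hs1 : ((swapn p c).-1 < m)%N.
  rewrite /swapn; case: eqP => _; first by lia. case: eqP => _; lia.
rewrite (permzE _ _ Hs1); last by rewrite /swapn; case: eqP => _; [|case: eqP => _]; lia.
rewrite (permzE _ _ Hc1) //; last by lia.
rewrite permM; congr (T (val (s _)).+1); apply: val_inj => /=.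
case: (eqVneq c p) => [E|cp].
  have -> : Ordinal Hc1 = Ordinal H1 by apply: val_inj; rewrite /= E.
  by rewrite tpermL /= E swapn_a.
case: (eqVneq c p.+1) => [E|cp1].
  have -> : Ordinal Hc1 = Ordinal H2 by apply: val_inj; rewrite /= E.
  by rewrite tpermR /= E swapn_a1.
rewrite tpermD /=; try (apply/eqP => /(congr1 val) /=; lia).
by rewrite swapn_id.
Qed.

Lemma sum_sz_permz m p (T : nat -> K) (G : (nat -> K) -> R) :
  (1 <= p < m)%N ->
  \sum_(s : 'S_m) G (sz p (permz s T)) = \sum_(s : 'S_m) G (permz s T).
Proof.
move=> /andP[p1 pm].
have H1 : (p.-1 < m)%N by lia.
under eq_bigr => s _ do rewrite (sz_permz s T H1 pm p1).
by rewrite [in RHS](reindex_inj (mulgI (tperm (Ordinal H1) (Ordinal pm)))).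
Qed.
End Reindex.

End MP7.
Import MP7.

Module MP8.
Local Set Implicit Arguments. Local Unset Strict Implicit. Local Unset Printing Implicit Defensive.
Local Open Scope ring_scope.

Definition Stmt (K : fieldType) (N : nat) : Prop :=
  forall (n : nat) (lam : nat -> nat) (f : nat -> nat) (a : nat) (h : K)
    (t : nat -> nat -> K) (z : nat -> K),
  (\sum_(1 <= k < N.+1) lam k)%N = n ->
  is_part N n lam f ->
  (1 <= a < n)%N ->
  (forall k c, (1 <= k < N)%N -> (1 <= c <= lamP lam k)%N -> t k c != 0) ->
  (forall k c d, (1 <= k < N)%N -> (1 <= c <= lamP lam k)%N ->
     (1 <= d <= lamP lam k)%N -> c != d -> t k c != t k d) ->
  (forall i, (1 <= i <= n)%N -> z i != 0) ->
  [/\ f a = f a.+1 -> W N n lam f h t (sz a z) = W N n lam f h t z,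
      (f a < f a.+1)%N -> z a != z a.+1 ->
        W N n lam (sI a f) h t z =
          (1 - h * z a / z a.+1) / (1 - z a / z a.+1) * W N n lam f h t (sz a z)
          + (h - 1) * (z a / z a.+1) / (1 - z a / z a.+1) * W N n lam f h t z
    & (f a.+1 < f a)%N -> h != 0 -> z a != z a.+1 ->
        W N n lam (sI a f) h t z =
          (1 - h^-1 * z a.+1 / z a) / (1 - z a.+1 / z a) * W N n lam f h t (sz a z)
          + (h^-1 - 1) * (z a.+1 / z a) / (1 - z a.+1 / z a) * W N n lam f h t z].

Lemma neq_sub (K : fieldType) (x y : K) : x != y -> x - y != 0.
Proof. by rewrite subr_eq0. Qed.

Section Step.
Variables (K : fieldType) (N' : nat).
Hypothesis IH : Stmt K N'.
Hypothesis N1 : (1 <= N')%N.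
Variables (n : nat) (lam f : nat -> nat) (a : nat) (h : K) (t : nat -> nat -> K) (z : nat -> K).
Hypothesis Hn : (\sum_(1 <= k < N'.+2) lam k)%N = n.
Hypothesis HP : is_part N'.+1 n lam f.
Hypothesis Ha : (1 <= a < n)%N.
Hypothesis Ht : forall k c, (1 <= k < N'.+1)%N -> (1 <= c <= lamP lam k)%N -> t k c != 0.
Hypothesis Htd : forall k c d, (1 <= k < N'.+1)%N -> (1 <= c <= lamP lam k)%N ->
     (1 <= d <= lamP lam k)%N -> c != d -> t k c != t k d.
Hypothesis Hz : forall i, (1 <= i <= n)%N -> z i != 0.

Local Notation m := (lamP lam N').
Local Notation jj := (ielt n f N').
Local Notation f' := (fun q => f (ielt n f N' q)).
Local Notation T := (t N').
Local Notation W' := (W N' (lamP lam N') lam (fun q => f (ielt n f N' q)) h t).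

Lemma WS z' : W N'.+1 n lam f h t z' = (1 - h) ^+ m *
  \sum_(s : 'S_m) (Topf h m n jj (permz s T) z' * W' (permz s T)).
Proof. exact: Wsplit. Qed.

Lemma Tnz (s : 'S_m) c : (1 <= c <= m)%N -> permz s T c != 0.
Proof.
move=> Hc; have Hc1 : (c.-1 < m)%N by lia.
rewrite (permzE _ _ Hc1); last by lia.
apply: Ht; first by lia.
have : (val (s (Ordinal Hc1)) < m)%N := ltn_ord _; lia.
Qed.

Lemma Tneq (s : 'S_m) c d : (1 <= c <= m)%N -> (1 <= d <= m)%N -> c != d ->
  permz s T c != permz s T d.
Proof.
move=> Hc Hd cd; have Hc1 : (c.-1 < m)%N by lia. have Hd1 : (d.-1 < m)%N by lia.
rewrite (permzE _ _ Hc1); last by lia.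
rewrite (permzE _ _ Hd1); last by lia.
apply: Htd; first by lia.
- have : (val (s (Ordinal Hc1)) < m)%N := ltn_ord _; lia.
- have : (val (s (Ordinal Hd1)) < m)%N := ltn_ord _; lia.
apply/negP => /eqP [] /val_inj /perm_inj [] E; move/eqP: cd; lia.
Qed.

Lemma IHs (s : 'S_m) p : (1 <= p < m)%N ->
  [/\ f' p = f' p.+1 -> W' (sz p (permz s T)) = W' (permz s T),
      (f' p < f' p.+1)%N -> permz s T p != permz s T p.+1 ->
        W N' m lam (sI p f') h t (permz s T) =
          (1 - h * permz s T p / permz s T p.+1) / (1 - permz s T p / permz s T p.+1)
             * W' (sz p (permz s T))
          + (h - 1) * (permz s T p / permz s T p.+1) / (1 - permz s T p / permz s T p.+1)
             * W' (permz s T)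
    & (f' p.+1 < f' p)%N -> h != 0 -> permz s T p != permz s T p.+1 ->
        W N' m lam (sI p f') h t (permz s T) =
          (1 - h^-1 * permz s T p.+1 / permz s T p) / (1 - permz s T p.+1 / permz s T p)
             * W' (sz p (permz s T))
          + (h^-1 - 1) * (permz s T p.+1 / permz s T p) / (1 - permz s T p.+1 / permz s T p)
             * W' (permz s T)].
Proof.
move=> Hp; apply: IH => //.
- exact: is_part_low.
- move=> k c Hk Hc; apply: Ht => //; lia.
- move=> k c d Hk Hc Hd cd; apply: Htd => //; lia.
- move=> i Hi; exact: Tnz.
Qed.

Lemma Tpp1 (s : 'S_m) p : (1 <= p < m)%N -> permz s T p != permz s T p.+1.
Proof. by move=> Hp; apply: Tneq; try lia; rewrite neq_ltn ltnSn. Qed.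

Lemma jj_in q : (1 <= q <= m)%N -> (f (jj q) <= N')%N.
Proof. by move=> Hq; have [] := @mem_ielt n f N' q; first by rewrite (count_le HP). Qed.

Lemma fa1_le : (f a.+1 <= N'.+1)%N.
Proof. case: HP => Hr _; have := Hr a.+1; lia. Qed.
Lemma fa_le : (f a <= N'.+1)%N.
Proof. case: HP => Hr _; have := Hr a; lia. Qed.

Lemma caseA : ~~ (f a <= N')%N -> ~~ (f a.+1 <= N')%N ->
  W N'.+1 n lam f h t (sz a z) = W N'.+1 n lam f h t z.
Proof.
move=> Pa Pa1; rewrite !WS; congr (_ * _); apply: eq_bigr => s _; congr (_ * _).
rewrite /Topf; apply: eq_big_nat => q Hq; rewrite Cz_sz //.
- by apply/eqP => E; move: Pa; rewrite -E jj_in //; lia.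
- by apply/eqP => E; move: Pa1; rewrite -E jj_in //; lia.
Qed.

Lemma za0 : z a != 0. Proof. apply: Hz; lia. Qed.
Lemma za10 : z a.+1 != 0. Proof. apply: Hz; lia. Qed.

Section CaseC.
Hypothesis HPa : (f a <= N')%N.
Hypothesis HPa1 : (f a.+1 <= N')%N.
Local Notation PP := (fun i => f i <= N')%N.
Local Notation LL1 := (L1 a (fun i => f i <= N')%N).
Local Notation LL2 := (L2 n a (fun i => f i <= N')%N).
Local Notation p := (size LL1).+1.

Lemma Jl_C : [seq i <- iota 1 n | f i <= N']%N = LL1 ++ [:: a; a.+1] ++ LL2.
Proof. by rewrite (filter_split Ha) /= HPa HPa1. Qed.

Lemma m_C : m = (size LL1 + 2 + size LL2)%N.
Proof. rewrite -(Jl_size HP) Jl_C !size_cat /=; lia. Qed.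

Lemma jjE_C q : jj q = nth 0%N (LL1 ++ [:: a; a.+1] ++ LL2) q.-1.
Proof. by rewrite /ielt Jl_C. Qed.

Lemma p_range : (1 <= p < m)%N.
Proof. rewrite m_C; lia. Qed.

Lemma jj_p : jj p = a.
Proof. by rewrite jjE_C /= nth_cat ltnn subnn. Qed.

Lemma jj_p1 : jj p.+1 = a.+1.
Proof. by rewrite jjE_C /= nth_cat ltnNge leqnSn /= subSnn. Qed.

Lemma jj_other q : (1 <= q <= m)%N -> q != p -> q != p.+1 -> jj q != a /\ jj q != a.+1.
Proof.
move=> Hq qp qp1; rewrite jjE_C.
have Hs : (q.-1 < size LL1 + size [:: a; a.+1] + size LL2)%N by rewrite /= -m_C; lia.
have [H1 H2 _] := nth_J Ha Hs.
case: (ltnP q.-1 (size LL1)) => Hl.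
  by have := H1 Hl; lia.
have : (size LL1 + size [:: a; a.+1] <= q.-1)%N by move: qp qp1 => /eqP ? /eqP ?; rewrite /=; lia.
by move/H2; lia.
Qed.

Lemma jj_sI_C : ielt n (sI a f) N' = jj.
Proof.
apply: functional_extensionality => c; rewrite /ielt /sI.
rewrite (filter_split_sw Ha (fun i => f i <= N')%N) /= swapn_a swapn_a1 HPa1 HPa.
by rewrite (filter_split Ha) /= HPa HPa1.
Qed.

Lemma f'sI_C q : (1 <= q <= m)%N -> sI a f (ielt n (sI a f) N' q) = sI p f' q.
Proof.
move=> Hq; rewrite jj_sI_C /sI.
case: (eqVneq q p) => [->|qp]; first by rewrite jj_p swapn_a swapn_a jj_p1.
case: (eqVneq q p.+1) => [->|qp1]; first by rewrite jj_p1 swapn_a1 swapn_a1 jj_p.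
have [E1 E2] := jj_other Hq qp qp1.
by rewrite !swapn_id.
Qed.

Lemma WSsI_C z' : W N'.+1 n lam (sI a f) h t z' = (1 - h) ^+ m *
  \sum_(s : 'S_m) (Topf h m n jj (permz s T) z' * W N' m lam (sI p f') h t (permz s T)).
Proof.
rewrite Wsplit //; last exact: is_part_sI.
rewrite jj_sI_C; congr (_ * _); apply: eq_bigr => s _; congr (_ * _).
apply: W_ext => q Hq; by rewrite -f'sI_C // jj_sI_C.
Qed.

Lemma caseC1 : f a = f a.+1 -> W N'.+1 n lam f h t (sz a z) = W N'.+1 n lam f h t z.
Proof.
move=> Ef; rewrite !WS; congr (_ * _); apply/eqP; rewrite -subr_eq0 -sumrB; apply/eqP.
pose E := fun U : nat -> K =>
  (Topf h m n jj U (sz a z) - Topf h m n jj U z) * (U p / (U p - U p.+1)).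
transitivity (\sum_(s : 'S_m) (E (permz s T) * W' (permz s T) -
     E (sz p (permz s T)) * W' (sz p (permz s T)))).
  apply: eq_bigr => s _.
  have [Hw _ _] := IHs s p_range.
  rewrite Hw; last by rewrite jj_p jj_p1.
  have [S [E1 E2 E3 E4]] := TopC h Ha p_range jj_p jj_p1 jj_other (permz s T) z.
  rewrite /E E1 E2 E3 E4 /sz swapn_a swapn_a1.
  have x0 : permz s T p != 0 by apply: Tnz; have := p_range; lia.
  have y0 : permz s T p.+1 != 0 by apply: Tnz; have := p_range; lia.
  have xy := Tpp1 s p_range.
  have xy' := neq_sub xy.
  have yx' : permz s T p.+1 - permz s T p != 0 by apply: neq_sub; rewrite eq_sym.
  rewrite /Qf /chi; field; by rewrite ?x0 ?y0 ?xy' ?yx'.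
rewrite sumrB (sum_sz_permz T (fun U => E U * W' U) p_range).
by rewrite subrr.
Qed.


Lemma caseC2 : (f a < f a.+1)%N -> z a != z a.+1 ->
  W N'.+1 n lam (sI a f) h t z =
  (1 - h * z a / z a.+1) / (1 - z a / z a.+1) * W N'.+1 n lam f h t (sz a z)
  + (h - 1) * (z a / z a.+1) / (1 - z a / z a.+1) * W N'.+1 n lam f h t z.
Proof.
move=> Hlt zab; rewrite WSsI_C !WS.
pose al := fun U : nat -> K => (1 - h * U p / U p.+1) / (1 - U p / U p.+1).
pose be := fun U : nat -> K => (h - 1) * (U p / U p.+1) / (1 - U p / U p.+1).
have step1 : \sum_(s : 'S_m) (Topf h m n jj (permz s T) z * W N' m lam (sI p f') h t (permz s T))
  = \sum_(s : 'S_m) (Topf h m n jj (sz p (permz s T)) z * al (sz p (permz s T)) * W' (permz s T)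
        + Topf h m n jj (permz s T) z * be (permz s T) * W' (permz s T)).
  transitivity (\sum_(s : 'S_m) (Topf h m n jj (permz s T) z * al (permz s T) * W' (sz p (permz s T))
        + Topf h m n jj (permz s T) z * be (permz s T) * W' (permz s T))).
    apply: eq_bigr => s _; have [_ H2 _] := IHs s p_range.
    rewrite H2; [|by rewrite jj_p jj_p1|exact: (Tpp1 s p_range)].
    rewrite /al /be; ring.
  rewrite big_split [in RHS]big_split /=; congr (_ + _).
  rewrite -(sum_sz_permz T (fun V => Topf h m n jj (sz p V) z * al (sz p V) * W' V) p_range) /=.
  by apply: eq_bigr => s _; rewrite szK.
have pt : forall s : 'S_m,
  Topf h m n jj (sz p (permz s T)) z * al (sz p (permz s T)) * W' (permz s T)
        + Topf h m n jj (permz s T) z * be (permz s T) * W' (permz s T) =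
  (1 - h * z a / z a.+1) / (1 - z a / z a.+1) * (Topf h m n jj (permz s T) (sz a z) * W' (permz s T))
  + (h - 1) * (z a / z a.+1) / (1 - z a / z a.+1) * (Topf h m n jj (permz s T) z * W' (permz s T)).
  move=> s.
  have [S [E1 E2 E3 E4]] := TopC h Ha p_range jj_p jj_p1 jj_other (permz s T) z.
  rewrite /al /be E1 E2 E3 /sz swapn_a swapn_a1.
  have x0 : permz s T p != 0 by apply: Tnz; have := p_range; lia.
  have y0 : permz s T p.+1 != 0 by apply: Tnz; have := p_range; lia.
  have xy := Tpp1 s p_range.
  have xy' := neq_sub xy.
  have yx' : permz s T p.+1 - permz s T p != 0 by apply: neq_sub; rewrite eq_sym.
  have zz' := neq_sub zab.
  have zz'' : z a.+1 - z a != 0 by apply: neq_sub; rewrite eq_sym.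
  have := za0; have := za10 => zb0 za0.
  rewrite /Qf /chi; field; by rewrite ?x0 ?y0 ?xy' ?yx' ?za0 ?zb0 ?zz' ?zz''.
rewrite step1 (eq_bigr _ (fun s _ => pt s)) big_split -!mulr_sumr /=; ring.
Qed.

Lemma caseC3 : (f a.+1 < f a)%N -> h != 0 -> z a != z a.+1 ->
  W N'.+1 n lam (sI a f) h t z =
  (1 - h^-1 * z a.+1 / z a) / (1 - z a.+1 / z a) * W N'.+1 n lam f h t (sz a z)
  + (h^-1 - 1) * (z a.+1 / z a) / (1 - z a.+1 / z a) * W N'.+1 n lam f h t z.
Proof.
move=> Hlt h0 zab; rewrite WSsI_C !WS.
pose al := fun U : nat -> K => (1 - h^-1 * U p.+1 / U p) / (1 - U p.+1 / U p).
pose be := fun U : nat -> K => (h^-1 - 1) * (U p.+1 / U p) / (1 - U p.+1 / U p).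
have step1 : \sum_(s : 'S_m) (Topf h m n jj (permz s T) z * W N' m lam (sI p f') h t (permz s T))
  = \sum_(s : 'S_m) (Topf h m n jj (sz p (permz s T)) z * al (sz p (permz s T)) * W' (permz s T)
        + Topf h m n jj (permz s T) z * be (permz s T) * W' (permz s T)).
  transitivity (\sum_(s : 'S_m) (Topf h m n jj (permz s T) z * al (permz s T) * W' (sz p (permz s T))
        + Topf h m n jj (permz s T) z * be (permz s T) * W' (permz s T))).
    apply: eq_bigr => s _; have [_ _ H3] := IHs s p_range.
    rewrite H3; [|by rewrite jj_p jj_p1|by []|exact: (Tpp1 s p_range)].
    rewrite /al /be; ring.
  rewrite big_split [in RHS]big_split /=; congr (_ + _).
  rewrite -(sum_sz_permz T (fun V => Topf h m n jj (sz p V) z * al (sz p V) * W' V) p_range) /=.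
  by apply: eq_bigr => s _; rewrite szK.
have pt : forall s : 'S_m,
  Topf h m n jj (sz p (permz s T)) z * al (sz p (permz s T)) * W' (permz s T)
        + Topf h m n jj (permz s T) z * be (permz s T) * W' (permz s T) =
  (1 - h^-1 * z a.+1 / z a) / (1 - z a.+1 / z a) * (Topf h m n jj (permz s T) (sz a z) * W' (permz s T))
  + (h^-1 - 1) * (z a.+1 / z a) / (1 - z a.+1 / z a) * (Topf h m n jj (permz s T) z * W' (permz s T)).
  move=> s.
  have [S [E1 E2 E3 E4]] := TopC h Ha p_range jj_p jj_p1 jj_other (permz s T) z.
  rewrite /al /be E1 E2 E3 /sz swapn_a swapn_a1.
  have x0 : permz s T p != 0 by apply: Tnz; have := p_range; lia.
  have y0 : permz s T p.+1 != 0 by apply: Tnz; have := p_range; lia.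
  have xy := Tpp1 s p_range.
  have xy' := neq_sub xy.
  have yx' : permz s T p.+1 - permz s T p != 0 by apply: neq_sub; rewrite eq_sym.
  have zz' := neq_sub zab.
  have zz'' : z a.+1 - z a != 0 by apply: neq_sub; rewrite eq_sym.
  have := za0; have := za10 => zb0 za0.
  rewrite /Qf /chi; field; by rewrite ?x0 ?y0 ?xy' ?yx' ?za0 ?zb0 ?zz' ?zz'' ?h0.
rewrite step1 (eq_bigr _ (fun s _ => pt s)) big_split -!mulr_sumr /=; ring.
Qed.
End CaseC.

Section CaseB.
Local Notation LL1 := (L1 a (fun i => f i <= N')%N).
Local Notation LL2 := (L2 n a (fun i => f i <= N')%N).
Local Notation p := (size LL1).+1.
Variables x y : nat.
Hypothesis Jx : [seq i <- iota 1 n | f i <= N']%N = LL1 ++ [:: x] ++ LL2.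
Hypothesis Jy : [seq i <- iota 1 n | sI a f i <= N']%N = LL1 ++ [:: y] ++ LL2.
Hypothesis Hxy : swapn a y = x.
Hypothesis Hx : (x == a) || (x == a.+1).
Hypothesis Hy : (y == a) || (y == a.+1).

Lemma m_B : m = (size LL1 + 1 + size LL2)%N.
Proof. rewrite -(Jl_size HP) Jx !size_cat /=; lia. Qed.

Lemma pB_range : (1 <= p <= m)%N.
Proof. rewrite m_B; lia. Qed.

Lemma jjE_B q : jj q = nth 0%N (LL1 ++ [:: x] ++ LL2) q.-1.
Proof. by rewrite /ielt Jx. Qed.
Lemma jj'E_B q : ielt n (sI a f) N' q = nth 0%N (LL1 ++ [:: y] ++ LL2) q.-1.
Proof. by rewrite /ielt Jy. Qed.

Lemma jj_pB : jj p = x.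
Proof. by rewrite jjE_B /= nth_cat ltnn subnn. Qed.
Lemma jj'_pB : ielt n (sI a f) N' p = y.
Proof. by rewrite jj'E_B /= nth_cat ltnn subnn. Qed.

Lemma jj_otherB q : (1 <= q <= m)%N -> q != p ->
  ielt n (sI a f) N' q = jj q /\ jj q != a /\ jj q != a.+1.
Proof.
move=> Hq qp; rewrite jjE_B jj'E_B.
have Hs : (q.-1 < size LL1 + size [:: x] + size LL2)%N by rewrite /= -m_B; lia.
have [H1 H2 _] := nth_J Ha Hs.
case: (ltnP q.-1 (size LL1)) => Hl.
  by have := H1 Hl; rewrite !nth_cat Hl => Hb; split => //; lia.
have Hl' : (size LL1 + size [:: x] <= q.-1)%N by move: qp => /eqP ?; rewrite /=; lia.
split; last by have := H2 Hl'; lia.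
rewrite !nth_cat ltnNge Hl /=.
have -> : (q.-1 - size LL1 = (q.-1 - size LL1).-1.+1)%N by move: Hl' => /=; lia.
by [].
Qed.

Lemma f'sI_B q : (1 <= q <= m)%N -> sI a f (ielt n (sI a f) N' q) = f' q.
Proof.
move=> Hq; rewrite /sI.
case: (eqVneq q p) => [->|qp]; first by rewrite jj'_pB Hxy jj_pB.
have [-> [E1 E2]] := jj_otherB Hq qp.
by rewrite swapn_id.
Qed.

Lemma WSsI_B z' : W N'.+1 n lam (sI a f) h t z' = (1 - h) ^+ m *
  \sum_(s : 'S_m) (Topf h m n (ielt n (sI a f) N') (permz s T) z' * W' (permz s T)).
Proof.
rewrite Wsplit //; last exact: is_part_sI.
congr (_ * _); apply: eq_bigr => s _; congr (_ * _).
by apply: W_ext => q Hq; rewrite f'sI_B.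
Qed.

Lemma ptB (A B : K) :
  (forall u : K, u != 0 -> Cz h n y u z = A * Cz h n x u (sz a z) + B * Cz h n x u z) ->
  W N'.+1 n lam (sI a f) h t z = A * W N'.+1 n lam f h t (sz a z) + B * W N'.+1 n lam f h t z.
Proof.
move=> Hu; rewrite WSsI_B !WS.
have pt : forall s : 'S_m,
  Topf h m n (ielt n (sI a f) N') (permz s T) z * W' (permz s T) =
  A * (Topf h m n jj (permz s T) (sz a z) * W' (permz s T)) +
  B * (Topf h m n jj (permz s T) z * W' (permz s T)).
  move=> s.
  have [X [E1 E2 E3]] := TopB h Ha (permz s T) z pB_range jj_otherB.
  rewrite E1 E2 E3 jj_pB jj'_pB Hu; last by apply: Tnz; have := pB_range; lia.
  ring.
rewrite (eq_bigr _ (fun s _ => pt s)) big_split -!mulr_sumr /=; ring.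
Qed.
End CaseB.

Lemma caseB2 : (f a <= N')%N -> ~~ (f a.+1 <= N')%N -> z a != z a.+1 ->
  W N'.+1 n lam (sI a f) h t z =
  (1 - h * z a / z a.+1) / (1 - z a / z a.+1) * W N'.+1 n lam f h t (sz a z)
  + (h - 1) * (z a / z a.+1) / (1 - z a / z a.+1) * W N'.+1 n lam f h t z.
Proof.
move=> Pa Pa1 zab; apply: (@ptB a a.+1).
- by rewrite (filter_split Ha) /= Pa (negbTE Pa1).
- by rewrite /sI (filter_split_sw Ha (fun i => f i <= N')%N) /= swapn_a swapn_a1 Pa (negbTE Pa1).
- exact: swapn_a1.
- by rewrite eqxx.
- by rewrite eqxx orbT.
move=> u u0; rewrite Cz_a1 // !Cz_a // Rp_sz // /sz swapn_a1.
have zz' := neq_sub zab.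
have := za0; have := za10 => zb0 za0.
have zz'' : z a.+1 - z a != 0 by apply: neq_sub; rewrite eq_sym.
field; by rewrite ?u0 ?za0 ?zb0 ?zz' ?zz''.
Qed.

Lemma caseB3 : ~~ (f a <= N')%N -> (f a.+1 <= N')%N -> h != 0 -> z a != z a.+1 ->
  W N'.+1 n lam (sI a f) h t z =
  (1 - h^-1 * z a.+1 / z a) / (1 - z a.+1 / z a) * W N'.+1 n lam f h t (sz a z)
  + (h^-1 - 1) * (z a.+1 / z a) / (1 - z a.+1 / z a) * W N'.+1 n lam f h t z.
Proof.
move=> Pa Pa1 h0 zab; apply: (@ptB a.+1 a).
- by rewrite (filter_split Ha) /= Pa1 (negbTE Pa).
- by rewrite /sI (filter_split_sw Ha (fun i => f i <= N')%N) /= swapn_a swapn_a1 Pa1 (negbTE Pa).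
- exact: swapn_a.
- by rewrite eqxx orbT.
- by rewrite eqxx.
move=> u u0; rewrite !Cz_a1 // !Cz_a // Rp_sz // /sz swapn_a.
have zz'' : z a.+1 - z a != 0 by apply: neq_sub; rewrite eq_sym.
have := za0; have := za10 => zb0 za0.
have zz' := neq_sub zab.
field; by rewrite ?u0 ?za0 ?zb0 ?zz' ?zz'' ?h0.
Qed.
End Step.

End MP8.
Import MP8.

Module MP9.
Local Set Implicit Arguments. Local Unset Strict Implicit. Local Unset Printing Implicit Defensive.
Local Open Scope ring_scope.

Lemma W1 (K : fieldType) n lam f (h : K) t z : W 1 n lam f h t z = 1.
Proof. by rewrite /W /lamB big_geq // expr0 mul1r /= /Ufun big_geq. Qed.

Lemma Stmt_all (K : fieldType) N : Stmt K N.
Proof.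
elim: N => [|N' IH].
  move=> n lam f a h t z Hn _ Ha; exfalso; move: Hn; rewrite big_geq // => Hn; lia.
move=> n lam f a h t z Hn HP Ha Ht Htd Hz.
case: (posnP N') => [N0|N1].
  subst N'; case: (HP) => Hr _.
  have := Hr a; have := Hr a.+1 => H1 H2.
  have E : f a = f a.+1 by lia.
  by split => *; rewrite ?W1 //; lia.
have fa : (f a <= N'.+1)%N by case: (HP) => Hr _; have := Hr a; lia.
have fa1 : (f a.+1 <= N'.+1)%N by case: (HP) => Hr _; have := Hr a.+1; lia.
case Pa: (f a <= N')%N; case Pa1: (f a.+1 <= N')%N.
- split.
  + by apply: caseC1.
  + by apply: caseC2.
  + by apply: caseC3.
- have Pa1' : ~~ (f a.+1 <= N')%N by rewrite Pa1.
  split; [lia| by move=> _; apply: caseB2 | lia].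
- have Pa' : ~~ (f a <= N')%N by rewrite Pa.
  split; [lia| lia | by move=> _; apply: caseB3].
- have Pa1' : ~~ (f a.+1 <= N')%N by rewrite Pa1.
  have Pa' : ~~ (f a <= N')%N by rewrite Pa.
  split; [by move=> _; apply: caseA | lia | lia].
Qed.

End MP9.
Import MP9.

Local Open Scope ring_scope.
Theorem corollary6p11 (K : fieldType) (N n : nat) (lam : nat -> nat)
  (f : nat -> nat) (a : nat) (h : K) (t : nat -> nat -> K) (z : nat -> K) :
  (\sum_(1 <= k < N.+1) lam k)%N = n ->
  is_part N n lam f ->
  (1 <= a < n)%N ->
  (forall k c, (1 <= k < N)%N -> (1 <= c <= lamP lam k)%N -> t k c != 0) ->
  (forall k c d, (1 <= k < N)%N -> (1 <= c <= lamP lam k)%N ->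
     (1 <= d <= lamP lam k)%N -> c != d -> t k c != t k d) ->
  (forall i, (1 <= i <= n)%N -> z i != 0) ->
  [/\ f a = f a.+1 -> W N n lam f h t (sz a z) = W N n lam f h t z,
      (f a < f a.+1)%N -> z a != z a.+1 ->
        W N n lam (sI a f) h t z =
          (1 - h * z a / z a.+1) / (1 - z a / z a.+1) * W N n lam f h t (sz a z)
          + (h - 1) * (z a / z a.+1) / (1 - z a / z a.+1) * W N n lam f h t z
    & (f a.+1 < f a)%N -> h != 0 -> z a != z a.+1 ->
        W N n lam (sI a f) h t z =
          (1 - h^-1 * z a.+1 / z a) / (1 - z a.+1 / z a) * W N n lam f h t (sz a z)
          + (h^-1 - 1) * (z a.+1 / z a) / (1 - z a.+1 / z a) * W N n lam f h t z].
Proof. exact: (@Stmt_all K N). Qed.
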